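(* Let $(X_f,G)$ be a semicocycle extension (with $K$-valued semicocycle $f$) of a minimal equicontinuous system $(\mathbb{T},G)$. Then $(X_f,G)$ is non-null if and only if there are disjoint compact sets $V_0,V_1\subseteq K$ such that for every $\ell\in\mathbb{N}$ there is a finite sequence $(g_i)_{i=1,\dots,\ell}$ in $G$ such that for every $a\in\{0,1\}^\ell$ there is $x\in X_f$ with $x_{g_i}\in V_{a_i}$ for $i=1,\dots,\ell$.
   Context: Semicocycle setting: $G$ topological group acting jointly continuously, minimally and equicontinuously on compact Hausdorff $\mathbb{T}$; $K$ compact Hausdorff; $f\colon G\theta_0\to K$ continuous with $\overline{G\theta_0}=\mathbb{T}$ and invariant under no rotation; $X_f\subseteq K^G$ is the closure of $\{\sigma^hf:h\in G\}$ where $f\equiv(f(g\theta_0))_{g\in G}$ and $\sigma^h((x_g)_g)=(x_{gh})_g$. Independence: for $A_0,A_1\subseteq X_f$, a set $J\subseteq G$ is an independence set for $(A_0,A_1)$ if for every finite $I\subseteq J$ and every $a\in\{0,1\}^I$, $\bigcap_{i\in I}\sigma^{i^{-1}}A_{a_i}\neq\emptyset$. A pair $(x_0,x_1)$ is an IN-pair if for all neighbourhoods $U_0\ni x_0$, $U_1\ni x_1$ the pair $(U_0,U_1)$ has finite independence sets of arbitrarily large cardinality. The system is null iff it has no IN-pair $(x_0,x_1)$ with $x_0\neq x_1$ (equivalently, it has zero topological sequence entropy), and non-null otherwise. *)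

(* Defs.v *)
From Stdlib Require Import List Arith.
Import ListNotations.
Set Implicit Arguments.

Definition set (T : Type) := T -> Prop.

Definition is_topology {T : Type} (op : set T -> Prop) : Prop :=
  op (fun _ => True) /\
  (forall U V, op U -> op V -> op (fun x => U x /\ V x)) /\
  (forall (I : Type) (F : I -> set T), (forall i, op (F i)) ->
      op (fun x => exists i, F i x)).

Definition prod_open {A B : Type} (opA : set A -> Prop) (opB : set B -> Prop)
  (U : set (A * B)) : Prop :=
  forall p, U p -> exists Ua Ub, opA Ua /\ opB Ub /\ Ua (fst p) /\ Ub (snd p) /\
    (forall a b, Ua a -> Ub b -> U (a, b)).

Definition pow_open {I K : Type} (opK : set K -> Prop) (U : set (I -> K)) : Prop :=
  forall x, U x -> exists (l : list I) (V : I -> set K),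
    (forall i, In i l -> opK (V i) /\ V i (x i)) /\
    (forall y, (forall i, In i l -> V i (y i)) -> U y).

Definition nbhd {T : Type} (op : set T -> Prop) (x : T) (N : set T) : Prop :=
  exists U, op U /\ U x /\ (forall y, U y -> N y).

Definition closure {T : Type} (op : set T -> Prop) (S : set T) : set T :=
  fun x => forall U, op U -> U x -> exists y, U y /\ S y.

Definition continuous {A B : Type} (opA : set A -> Prop) (opB : set B -> Prop)
  (f : A -> B) : Prop := forall V, opB V -> opA (fun x => V (f x)).

Definition continuous_on {A B : Type} (opA : set A -> Prop) (opB : set B -> Prop)
  (S : set A) (f : A -> B) : Prop :=
  forall x, S x -> forall V, opB V -> V (f x) ->
    exists U, opA U /\ U x /\ (forall y, S y -> U y -> V (f y)).

Definition hausdorff {T : Type} (op : set T -> Prop) : Prop :=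
  forall x y, x <> y -> exists U V, op U /\ op V /\ U x /\ V y /\
    (forall z, U z -> V z -> False).

Definition compact_set {T : Type} (op : set T -> Prop) (A : set T) : Prop :=
  forall (I : Type) (F : I -> set T), (forall i, op (F i)) ->
    (forall x, A x -> exists i, F i x) ->
    exists l : list I, forall x, A x -> exists i, In i l /\ F i x.

Definition compact {T : Type} (op : set T -> Prop) : Prop :=
  compact_set op (fun _ => True).

Definition is_group {G : Type} (mul : G -> G -> G) (inv : G -> G) (e : G) : Prop :=
  (forall a b c, mul a (mul b c) = mul (mul a b) c) /\
  (forall a, mul e a = a) /\ (forall a, mul a e = a) /\
  (forall a, mul (inv a) a = e) /\ (forall a, mul a (inv a) = e).

Definition topological_group {G : Type} (opG : set G -> Prop)
  (mul : G -> G -> G) (inv : G -> G) (e : G) : Prop :=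
  is_topology opG /\ is_group mul inv e /\
  continuous (prod_open opG opG) opG (fun p => mul (fst p) (snd p)) /\
  continuous opG opG inv.

Definition is_action {G T : Type} (mul : G -> G -> G) (e : G) (act : G -> T -> T) : Prop :=
  (forall x, act e x = x) /\ (forall g h x, act (mul g h) x = act g (act h x)).

Definition jointly_continuous {G T : Type} (opG : set G -> Prop) (opT : set T -> Prop)
  (act : G -> T -> T) : Prop :=
  continuous (prod_open opG opT) opT (fun p => act (fst p) (snd p)).

Definition orbit {G T : Type} (act : G -> T -> T) (x : T) : set T :=
  fun y => exists g, y = act g x.

Definition minimal {G T : Type} (opT : set T -> Prop) (act : G -> T -> T) : Prop :=
  forall x y, closure opT (orbit act x) y.

(* neighbourhoods of the diagonal = entourages of the unique uniformity of a
   compact Hausdorff space *)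
Definition diag_nbhd {T : Type} (opT : set T -> Prop) (W : set (T * T)) : Prop :=
  exists U, prod_open opT opT U /\ (forall x, U (x, x)) /\ (forall p, U p -> W p).

Definition equicontinuous {G T : Type} (opT : set T -> Prop) (act : G -> T -> T) : Prop :=
  forall W, diag_nbhd opT W -> exists V, diag_nbhd opT V /\
    forall g x y, V (x, y) -> W (act g x, act g y).

Definition graph_closure {G T K : Type} (opT : set T -> Prop) (opK : set K -> Prop)
  (act : G -> T -> T) (th0 : T) (f : T -> K) : set (T * K) :=
  closure (prod_open opT opK) (fun p => exists g, p = (act g th0, f (act g th0))).

Definition homeomorphism {T : Type} (opT : set T -> Prop) (r : T -> T) : Prop :=
  exists r', (forall x, r' (r x) = x) /\ (forall x, r (r' x) = x) /\
    continuous opT opT r /\ continuous opT opT r'.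

Definition rotation {G T : Type} (opT : set T -> Prop) (act : G -> T -> T) (r : T -> T) : Prop :=
  homeomorphism opT r /\ forall g x, r (act g x) = act g (r x).

Definition invariant_under_no_rotation {G T K : Type} (opT : set T -> Prop)
  (opK : set K -> Prop) (act : G -> T -> T) (th0 : T) (f : T -> K) : Prop :=
  forall r, rotation opT act r ->
    (forall p, graph_closure opT opK act th0 f p <->
               graph_closure opT opK act th0 f (r (fst p), snd p)) ->
    forall x, r x = x.

Definition seq_of {G T K : Type} (act : G -> T -> T) (th0 : T) (f : T -> K) : G -> K :=
  fun g => f (act g th0).

Definition shift {G K : Type} (mul : G -> G -> G) (h : G) (x : G -> K) : G -> K :=
  fun g => x (mul g h).

Definition X_f {G T K : Type} (opK : set K -> Prop) (mul : G -> G -> G)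
  (act : G -> T -> T) (th0 : T) (f : T -> K) : set (G -> K) :=
  closure (pow_open opK) (fun x => exists h, x = shift mul h (seq_of act th0 f)).

Definition shift_img {G K : Type} (mul : G -> G -> G) (h : G) (A : set (G -> K)) : set (G -> K) :=
  fun x => exists y, A y /\ x = shift mul h y.

Definition independence_set {G K : Type} (mul : G -> G -> G) (inv : G -> G)
  (X : set (G -> K)) (A0 A1 : set (G -> K)) (J : set G) : Prop :=
  forall I : list G, (forall i, In i I -> J i) ->
    forall a : G -> bool, exists x, X x /\
      forall i, In i I -> shift_img mul (inv i) (if a i then A1 else A0) x.

Definition IN_pair {G K : Type} (opK : set K -> Prop) (mul : G -> G -> G) (inv : G -> G)
  (X : set (G -> K)) (x0 x1 : G -> K) : Prop :=
  forall N0 N1, nbhd (pow_open opK) x0 N0 -> nbhd (pow_open opK) x1 N1 ->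
    forall n : nat, exists J : list G, NoDup J /\ n <= length J /\
      independence_set mul inv X (fun x => X x /\ N0 x) (fun x => X x /\ N1 x)
        (fun g => In g J).

Definition non_null {G K : Type} (opK : set K -> Prop) (mul : G -> G -> G) (inv : G -> G)
  (X : set (G -> K)) : Prop :=
  exists x0 x1, X x0 /\ X x1 /\ x0 <> x1 /\ IN_pair opK mul inv X x0 x1.

(* Main.v *)
Require Import Defs.
From Stdlib Require Import List Arith.
Module Comb.
From mathcomp Require Import all_boot.
Set Implicit Arguments. Unset Strict Implicit. Unset Printing Implicit Defensive.

Lemma pigeon (m c : nat) (f : nat -> nat) (xs : seq nat) :
  (forall y, y \in xs -> f y < c.+1) -> c.+1 * m <= size xs ->
  exists c1, m <= count (fun y => f y == c1) xs.
Proof.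
elim: c xs => [|c IH] xs Hf Hs.
  exists 0; rewrite (@eq_in_count _ _ predT) ?count_predT.
    by rewrite mul1n in Hs.
  by move=> y /Hf; rewrite ltnS leqn0.
have [Hm|Hm] := leqP m (count (fun y => f y == c.+1) xs); first by exists c.+1.
have := IH [seq y <- xs | f y != c.+1].
case.
- move=> y; rewrite mem_filter => /andP [Hy /Hf]; rewrite ltnS leq_eqVlt.
  by rewrite (negbTE Hy).
- rewrite size_filter.
  have := count_predC (fun y => f y == c.+1) xs.
  move=> Hc.
  have : c.+1 * m + m <= size xs by rewrite -mulSnr.
  rewrite -Hc => H2.
  have : c.+1 * m + count (fun y => f y == c.+1) xs <= count (fun y => f y == c.+1) xs + count (predC (fun y => f y == c.+1)) xs.
    by apply: leq_trans H2; rewrite leq_add2l ltnW.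
  by rewrite addnC leq_add2l.
move=> c1 Hc1; exists c1.
rewrite count_filter in Hc1.
apply: (leq_trans Hc1); apply: sub_count => y /andP [] //.
Qed.

Definition homog (s : nat) (chi : seq nat -> nat) (H : seq nat) :=
  forall Y1 Y2, subseq Y1 H -> subseq Y2 H -> size Y1 = s -> size Y2 = s -> chi Y1 = chi Y2.

Definition leaderhomog (s : nat) (chi : seq nat -> nat) (xs : seq nat) (lc : nat -> nat) :=
  forall Y, subseq Y xs -> size Y = s.+1 -> chi Y = lc (head 0 Y).

Lemma ramsey (s : nat) : forall c m, exists N, forall H chi, uniq H -> N <= size H ->
  (forall Y, chi Y < c) -> exists H', subseq H' H /\ m <= size H' /\ homog s chi H'.
Proof.
elim: s => [|s IHs] c m.
  exists m => H chi Hu Hs Hc; exists H; split => //; split => //.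
  by move=> [|? ?] [|? ?] //.
have lead : forall k, exists M, forall H chi, uniq H -> M <= size H -> (forall Y, chi Y < c) ->
   exists xs lc, subseq xs H /\ k <= size xs /\ (forall y, y \in xs -> lc y < c) /\ leaderhomog s chi xs lc.
  elim=> [|k [Mk HMk]].
    exists 0 => H chi _ _ _; exists [::], (fun _ => 0); split; first exact: sub0seq.
    split => //; split => //.
    by move=> Y; rewrite subseq0 => /eqP ->.
  have [N HN] := IHs c Mk.
  exists N.+1 => H chi Hu Hs Hc.
  case: H Hu Hs => [|x H1] //= /andP [Hx Hu1] Hs.
  have [S [SH1 [SMk Shom]]] := HN H1 (fun Y => chi (x :: Y)) Hu1 Hs (fun Y => Hc _).
  have Su : uniq S := subseq_uniq SH1 Hu1.
  have [xs' [lc' [xsS [kxs [lcb lh]]]]] := HMk S chi Su SMk Hc.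
  pose c0 := chi (x :: take s S).
  exists (x :: xs'), (fun y => if y == x then c0 else lc' y).
  split; first by rewrite /= eqxx; exact: subseq_trans xsS SH1.
  split; first by [].
  split.
    move=> y; rewrite inE; case: eqP => [_ _|_ /= Hy]; first exact: Hc.
    exact: lcb.
  move=> [|y Y'] //= Hsub Hsz.
  case: (eqVneq x y) Hsub => [<- | Hxy] /= Hsub.
    rewrite /c0.
    have Y'S : subseq Y' S := subseq_trans Hsub xsS.
    have szS : s <= size S by have := size_subseq Y'S; case: Hsz => ->.
    apply: (Shom Y' (take s S)) => //.
    - by rewrite -{2}(cat_take_drop s S) prefix_subseq.
    - by case: Hsz.
    - by rewrite size_take_min; apply/minn_idPl.

  by apply: lh.
have [M HM] := lead (c * m).
exists M => H chi Hu Hs Hc.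
have [xs [lc [xsH [kxs [lcb lh]]]]] := HM H chi Hu Hs Hc.
case: c Hc lcb kxs {HM lead} => [|c] Hc lcb kxs.
  by have := Hc [::].
have [c1 Hc1] := pigeon lcb kxs.
exists [seq y <- xs | lc y == c1]; split.
  exact: subseq_trans (filter_subseq _ _) xsH.
split; first by rewrite size_filter.
move=> Y1 Y2 H1 H2 S1 S2.
have P Y : subseq Y [seq y <- xs | lc y == c1] -> size Y = s.+1 -> chi Y = c1.
  move=> HY SY.
  rewrite lh //; last exact: subseq_trans HY (filter_subseq _ _).
  case: Y HY SY => [|y Y] //= HY _.
  have : y \in [seq y <- xs | lc y == c1] by apply: (mem_subseq HY); rewrite inE eqxx.
  by rewrite mem_filter => /andP [/eqP].
by rewrite (P Y1) // (P Y2).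
Qed.

From mathcomp Require Import zify.
From Stdlib Require Import Lia.

Fixpoint code (l : seq bool) : nat := if l is b :: l' then b + (code l').*2 else 0.

Lemma code_lt l : code l < 2 ^ size l.
Proof. elim: l => [|b l IH] //=; rewrite expnS; case: b; lia. Qed.

Lemma code_inj l1 l2 : size l1 = size l2 -> code l1 = code l2 -> l1 = l2.
Proof.
elim: l1 l2 => [|b1 l1 IH] [|b2 l2] //= [Hs] Hc.
have Hb : b1 = b2.
  have := congr1 odd Hc; rewrite !oddD !odd_double !addbF.
  by case: b1 {Hc}; case: b2.
subst b2; congr (_ :: _); apply: IH => //.
move: Hc; case: b1; lia.
Qed.

Lemma subseq_nth_gen (x0 : nat) (s2 : seq nat) : forall d idx, sorted ltn idx ->
  all (fun i => (d <= i) && (i < d + size s2)) idx ->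
  subseq (map (fun i => nth x0 s2 (i - d)) idx) s2.
Proof.
elim: s2 => [|y s2 IH] d [|i idx] //.
- by move=> _ /= /andP [/andP [H1 H2]]; lia.
move=> Hp /andP [/andP [Hd Hi] Hall].
have Hmin : all (ltn i) idx := order_path_min (@ltn_trans) Hp.
have Hs : sorted ltn idx := path_sorted Hp.
case: (eqVneq i d) => [Eid|Nid].
  subst i; rewrite /= subnn /= eqxx.
  have -> : map (fun j => nth x0 (y :: s2) (j - d)) idx = map (fun j => nth x0 s2 (j - d.+1)) idx.
    apply/eq_in_map => j Hj; have := allP Hmin j Hj => /= Hlt.
    by have -> : j - d = (j - d.+1).+1 by lia.
  apply: IH => //; apply/allP => j Hj.
  have := allP Hmin j Hj; have := allP Hall j Hj => /andP [_ H2] H3.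
  simpl in H2, H3; apply/andP; split; lia.
have -> : map (fun j => nth x0 (y :: s2) (j - d)) (i :: idx) = map (fun j => nth x0 s2 (j - d.+1)) (i :: idx).
  apply/eq_in_map => j; rewrite inE => /orP [/eqP ->|Hj].
    by have -> : i - d = (i - d.+1).+1 by lia.
  have := allP Hmin j Hj => /= Hlt.
  by have -> : j - d = (j - d.+1).+1 by lia.
apply: subseq_trans (subseq_cons s2 y).
apply: IH; first by [].
apply/allP => j; rewrite inE => /orP [/eqP ->|Hj]; first by simpl in Hi; apply/andP; split; lia.
have := allP Hmin j Hj; have := allP Hall j Hj => /andP [_ H2] H3.
simpl in H2, H3; apply/andP; split; lia.
Qed.

Lemma subseq_nth (s2 : seq nat) idx : sorted ltn idx -> all (fun i => i < size s2) idx ->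
  subseq (map (nth 0 s2) idx) s2.
Proof.
move=> Hs Ha.
have := @subseq_nth_gen 0 s2 0 idx Hs.
rewrite (eq_map (g := nth 0 s2)); last by move=> i; rewrite subn0.
apply; apply/allP => i Hi; rewrite (allP Ha i Hi) andbT //.
Qed.


Lemma E_comb (m : nat) : exists N, forall (n : nat) (col : (nat -> bool) -> nat -> bool), N <= n ->
  exists (L : seq nat) (x : bool), size L = m /\ uniq L /\ (forall k, k \in L -> k < n) /\
   forall sg : nat -> bool, exists tau : nat -> bool, (forall k, k \in L -> tau k = sg k) /\
     (forall k, k \in L -> sg k = false -> col tau k = x).
Proof.
case: m => [|m0].
  exists 0 => n col _; exists [::], true; split => //; split => //; split => // sg.
  by exists sg.
set m := m0.+1.
pose s := m + m.
have [N HN] := ramsey s (2 ^ s) (2 * s + 1).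
exists N => n col Hn.
pose kap (Y : seq nat) (k : nat) := col (fun i => i \notin Y) k.
pose chi (Y : seq nat) := if size Y == s then code (map (kap Y) Y) else 0.
have chib : forall Y, chi Y < 2 ^ s.
  move=> Y; rewrite /chi; case: eqP => [<-|_]; last by rewrite expn_gt0.
  by have := code_lt (map (kap Y) Y); rewrite size_map.
have Hsz : N <= size (iota 0 n) by rewrite size_iota.
have [H' [H'sub [H'size H'hom]]] := HN (iota 0 n) chi (iota_uniq 0 n) Hsz chib.
have H'u : uniq H' := subseq_uniq H'sub (iota_uniq 0 n).
have H'n : forall k, k \in H' -> k < n.
  by move=> k /(mem_subseq H'sub); rewrite mem_iota.
pose Y0 := take s H'.
have Y0sub : subseq Y0 H' by have := prefix_subseq (take s H') (drop s H'); rewrite cat_take_drop.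
have Y0size : size Y0 = s by rewrite size_take_min; apply/minn_idPl; lia.
pose F := map (kap Y0) Y0.
have Fsize : size F = s by rewrite size_map.
have HF : forall Y, subseq Y H' -> size Y = s -> map (kap Y) Y = F.
  move=> Y HY SY; apply: code_inj; first by rewrite !size_map SY.
  have := H'hom Y Y0 HY Y0sub SY Y0size.
  by rewrite /chi SY Y0size eqxx.
pose x := m <= count id F.
have Hcx : m <= count (fun b => b == x) F.
  have Hc := count_predC id F.
  have E1 : count (fun b => b == true) F = count id F by apply: eq_count => b; case: b.
  have E2 : count (fun b => b == false) F = count (predC id) F by apply: eq_count => b; case: b.
  rewrite /x; case: (leqP m (count id F)) => Hm; [rewrite E1 | rewrite E2]; lia.
pose U := [seq r <- iota 0 s | nth false F r == x].
have Usize : m <= size U.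
  rewrite size_filter.
  have -> : count (fun r => nth false F r == x) (iota 0 s) = count (fun b => b == x) F.
    by rewrite -{2}(mkseq_nth false F) Fsize /mkseq count_map.
  exact: Hcx.
pose u t := nth 0 U t.
have U1 : forall t, t < m -> u t < s /\ nth false F (u t) = x.
  move=> t Ht; have : u t \in U by apply: mem_nth; exact: leq_trans Ht Usize.
  by rewrite mem_filter mem_iota => /andP [/eqP -> /andP [_ H]]; split => //; lia.
have U2 : forall t1 t2, t1 < m -> t2 < m -> u t1 = u t2 -> t1 = t2.
  move=> t1 t2 H1 H2 E; apply/eqP.
  have Uu : uniq U := filter_uniq _ (iota_uniq 0 s).
  rewrite -(nth_uniq 0 (leq_trans H1 Usize) (leq_trans H2 Usize) Uu).
  by apply/eqP.
have Hnth : forall i j, i < size H' -> j < size H' -> nth 0 H' i = nth 0 H' j -> i = j.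
  move=> i j Hi Hj E; apply/eqP; rewrite -(nth_uniq 0 Hi Hj H'u); exact/eqP.
pose L := map (fun t => nth 0 H' (2 * u t)) (iota 0 m).
have Lmem : forall k, k \in L -> exists2 t, t < m & k = nth 0 H' (2 * u t).
  move=> k /mapP [t]; rewrite mem_iota => /andP [_ Ht] ->; exists t => //.
have bnd : forall t, t < m -> 2 * u t < size H'.
  move=> t Ht; have := U1 t Ht; lia.
exists L, x; split; first by rewrite size_map size_iota.
split.
  rewrite map_inj_in_uniq ?iota_uniq // => t1 t2; rewrite !mem_iota => /andP [_ Ht1] /andP [_ Ht2] E.
  apply: U2 => //.
  have := Hnth _ _ (bnd _ Ht1) (bnd _ Ht2) E; lia.
split.
  move=> k /Lmem [t Ht ->]; apply: H'n; apply: mem_nth; exact: bnd.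
move=> sg.
pose inZ r := has (fun t => (~~ sg (nth 0 H' (2 * u t))) && (u t == r)) (iota 0 m).
pose phi r := if inZ r then 2 * r else (2 * r).+1.
pose Y := map (fun r => nth 0 H' (phi r)) (iota 0 s).
have phib : forall r, r < s -> phi r < size H'.
  by move=> r Hr; rewrite /phi; case: (inZ r); lia.
have Ysub : subseq Y H'.
  have -> : Y = map (nth 0 H') (map phi (iota 0 s)) by rewrite /Y -map_comp.
  apply: subseq_nth.
    rewrite sorted_map; apply: (sub_sorted _ (iota_ltn_sorted 0 s)).
    move=> a b /= Hab; rewrite /phi; case: (inZ a); case: (inZ b); lia.
  by apply/allP => i /mapP [r]; rewrite mem_iota => /andP [_ Hr] ->; apply: phib.
have Ysize : size Y = s by rewrite size_map size_iota.
have HY := HF Y Ysub Ysize.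
exists (fun i => i \notin Y).
have key : forall t, t < m -> (nth 0 H' (2 * u t) \in Y) = ~~ sg (nth 0 H' (2 * u t)).
  move=> t Ht; apply/idP/idP.
    move=> /mapP [r]; rewrite mem_iota => /andP [_ Hr] E.
    have E2 := Hnth _ _ (bnd t Ht) (phib r Hr) E.
    move: E2; rewrite /phi; case HZ: (inZ r); last by lia.
    move=> E3; have Er : r = u t by lia.
    move: HZ; rewrite /inZ => /hasP [t']; rewrite mem_iota => /andP [_ Ht'] /andP [Hs /eqP Eu].
    have Ett : t' = t by apply: U2 => //; rewrite Eu.
    by rewrite -Ett.
  move=> Hs; apply/mapP; exists (u t); first by rewrite mem_iota; have := U1 t Ht; lia.
  have Hz : inZ (u t) by apply/hasP; exists t; [rewrite mem_iota; lia | rewrite Hs eqxx].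
  by rewrite /phi Hz.
split.
  move=> k /Lmem [t Ht ->]; rewrite key //; exact: negbK.
move=> k /Lmem [t Ht ->] Hsg.
have Hin : inZ (u t) by apply/hasP; exists t; [rewrite mem_iota; lia | rewrite Hsg eqxx].
have [Uts Utx] := U1 t Ht.
have Eny : nth 0 Y (u t) = nth 0 H' (2 * u t).
  by rewrite /Y (nth_map 0) ?size_iota // nth_iota // /phi Hin.
rewrite -Eny -Utx -HY.
by rewrite (nth_map 0) ?Ysize.
Qed.


Lemma In_mem (k : nat) L : List.In k L <-> k \in L.
Proof.
elim: L => [|y L IH] //=; rewrite inE; split.
  by case=> [->|/IH ->]; rewrite ?eqxx ?orbT.
by case/orP => [/eqP ->|/IH]; [left|right].
Qed.

Lemma uniq_NoDup (L : seq nat) : uniq L -> List.NoDup L.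
Proof.
elim: L => [|y L IH] /=; first by constructor.
case/andP => Hy HL; constructor; last exact: IH.
by move/In_mem; rewrite (negbTE Hy).
Qed.

Lemma E_std (m : nat) : exists N, forall (n : nat) (col : (nat -> bool) -> nat -> bool), (N <= n)%coq_nat ->
  exists (L : list nat) (x : bool), length L = m /\ List.NoDup L /\ (forall k, List.In k L -> (k < n)%coq_nat) /\
   forall sg : nat -> bool, exists tau : nat -> bool, (forall k, List.In k L -> tau k = sg k) /\
     (forall k, List.In k L -> sg k = false -> col tau k = x).
Proof.
have [N HN] := E_comb m; exists N => n col /leP Hn.
have [L [x [HL1 [HL2 [HL3 HL4]]]]] := HN n col Hn.
exists L, x; split; first by rewrite -HL1.
split; first exact: uniq_NoDup.
split; first by move=> k /In_mem /HL3 /ltP.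
move=> sg; have [tau [T1 T2]] := HL4 sg; exists tau; split.
  by move=> k /In_mem; apply: T1.
by move=> k /In_mem; apply: T2.
Qed.
End Comb.
Module ZW.
From mathcomp Require Import all_boot classical_sets boolp.
Local Open Scope classical_set_scope.
Lemma zorn_sets (T:Type) (P : (T->Prop) -> Prop) :
 (forall F : (T->Prop)->Prop, (forall A, F A -> P A) ->
   (forall A B, F A -> F B -> (forall x, A x -> B x) \/ (forall x, B x -> A x)) ->
   P (fun x => exists A, F A /\ A x)) ->
 exists A, P A /\ forall B, (forall x, A x -> B x) -> (exists x, B x /\ ~ A x) -> ~ P B.
Proof.
move=> H.
have Hz : forall F : set (set T), F `<=` P -> total_on F subset ->
      P (\bigcup_(X in F) X).
  move=> F FP Ftot.
  have -> : (\bigcup_(X in F) X) = (fun x => exists A, F A /\ A x).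
    apply/funext => x; apply/propext; split.
      by case=> X FX Xx; exists X.
    by case=> X [FX Xx]; exists X.
  apply: H => //.
have [A [PA HA]] := Zorn_bigcup Hz.
exists A; split; first exact: PA.
move=> B AB [x [Bx nAx]] PB.
apply: (HA B _ PB).
split; first exact: AB.
move=> BA; apply: nAx; exact: BA.
Qed.
End ZW.
From Stdlib Require Import List Arith Lia.
From Stdlib Require Import Classical ClassicalEpsilon FunctionalExtensionality PropExtensionality.
Import ListNotations.

Lemma op_ext {T} (op : set T -> Prop) (U V : set T) : op U -> (forall z, U z <-> V z) -> op V.
Proof.
  intros HU H. replace V with U; auto.
  apply functional_extensionality; intro z; apply propositional_extensionality; auto.
Qed.

Lemma top_full {T} (op : set T -> Prop) : is_topology op -> op (fun _ => True).
Proof. intros [H _]; exact H. Qed.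

Lemma top_inter {T} (op : set T -> Prop) U V : is_topology op -> op U -> op V -> op (fun x => U x /\ V x).
Proof. intros [_ [H _]]; apply H. Qed.

Lemma top_union {T} (op : set T -> Prop) (I : Type) (F : I -> set T) : is_topology op ->
  (forall i, op (F i)) -> op (fun x => exists i, F i x).
Proof. intros [_ [_ H]]; apply H. Qed.

Lemma top_empty {T} (op : set T -> Prop) : is_topology op -> op (fun _ => False).
Proof.
  intro Ht. apply (op_ext op (fun x => exists i : Empty_set, (fun (i : Empty_set) => match i return set T with end) i x)).
  - apply top_union; auto. intros [].
  - intro z; split; [intros [[] _] | intros []].
Qed.

Lemma open_inter_list {T A} (op : set T -> Prop) (l : list A) (S : A -> set T) :
  is_topology op -> (forall a, In a l -> op (S a)) -> op (fun z => forall a, In a l -> S a z).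
Proof.
  intros Ht. induction l as [|a l IH]; intros H.
  - apply (op_ext op (fun _ => True)); [apply top_full; auto|]. intro z; split; auto. intros _ a [].
  - apply (op_ext op (fun z => S a z /\ (forall b, In b l -> S b z))).
    + apply top_inter; auto. apply H; left; auto. apply IH; intros b Hb; apply H; right; auto.
    + intro z; split.
      * intros [H1 H2] b [<-|Hb]; auto.
      * intros H1; split; [apply H1; left; auto|intros b Hb; apply H1; right; auto].
Qed.

Lemma open_inter_cond {T A} (op : set T -> Prop) (l : list A) (Q : A -> Prop) (S : A -> set T) :
  is_topology op -> (forall a, In a l -> op (S a)) -> op (fun z => forall a, In a l -> Q a -> S a z).
Proof.
  intros Ht H.
  apply (op_ext op (fun z => forall a, In a l -> (fun a z => Q a -> S a z) a z)).
  - apply open_inter_list; auto. intros a Ha. destruct (classic (Q a)) as [Hq|Hq].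
    + apply (op_ext op (S a)); auto. intro z; split; auto.
    + apply (op_ext op (fun _ => True)); [apply top_full; auto|]. intro z; split; auto; intros _ Hq'; contradiction.
  - intro z; split; auto.
Qed.

Lemma open_union_list {T A} (op : set T -> Prop) (l : list A) (S : A -> set T) :
  is_topology op -> (forall a, In a l -> op (S a)) -> op (fun z => exists a, In a l /\ S a z).
Proof.
  intros Ht H.
  apply (op_ext op (fun z => exists i : {a | In a l}, S (proj1_sig i) z)).
  - apply top_union; auto. intros [a Ha]; simpl; auto.
  - intro z; split.
    + intros [[a Ha] Hz]; exists a; auto.
    + intros [a [Ha Hz]]; exists (exist _ a Ha); auto.
Qed.

Lemma closed_compact {K} (opK : set K -> Prop) (Q : set K) : is_topology opK -> compact opK -> opK Q ->
  compact_set opK (fun k => ~ Q k).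
Proof.
  intros Ht Hc HQ I F HF Hcov.
  destruct (Hc (option I) (fun o => match o with None => Q | Some i => F i end)) as [l Hl].
  - intros [i|]; auto.
  - intros x _. destruct (classic (Q x)) as [Hq|Hq].
    + exists None; auto.
    + destruct (Hcov x Hq) as [i Hi]; exists (Some i); auto.
  - exists (flat_map (fun o => match o with None => [] | Some i => [i] end) l).
    intros x Hx. destruct (Hl x Logic.I) as [[i|] [Hin Hi]].
    + exists i; split; auto. apply in_flat_map. exists (Some i); simpl; auto.
    + contradiction.
Qed.

Lemma separation {K} (opK : set K -> Prop) (C : set K) (k : K) : is_topology opK -> hausdorff opK ->
  compact_set opK C -> ~ C k ->
  exists O Q, opK O /\ opK Q /\ O k /\ (forall z, C z -> Q z) /\ (forall z, O z -> Q z -> False).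
Proof.
  intros Ht Hh Hc Hk.
  set (I := {p : set K * set K | opK (fst p) /\ opK (snd p) /\ fst p k /\ (forall z, fst p z -> snd p z -> False)}).
  destruct (Hc I (fun i => snd (proj1_sig i))) as [l Hl].
  - intros i; destruct (proj2_sig i) as [_ [H _]]; exact H.
  - intros z Hz. assert (k <> z) as Hne by (intro E; apply Hk; rewrite E; exact Hz).
    destruct (Hh k z Hne) as [U [V [HU [HV [Uk [Vz Hd]]]]]].
    exists (exist _ (U, V) (conj HU (conj HV (conj Uk Hd)))); simpl; auto.
  - exists (fun z => forall i, In i l -> fst (proj1_sig i) z).
    exists (fun z => exists i, In i l /\ snd (proj1_sig i) z).
    split; [apply open_inter_list; auto; intros i _; apply (proj2_sig i)|].
    split; [apply open_union_list; auto; intros i _; apply (proj2_sig i)|].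
    split; [intros i _; apply (proj2_sig i)|].
    split; [intros z Hz; apply Hl; auto|].
    intros z H1 [i [Hi H2]]. destruct (proj2_sig i) as [_ [_ [_ Hd]]].
    apply (Hd z); auto.
Qed.

Lemma compact_closed {K} (opK : set K -> Prop) (C : set K) : is_topology opK -> hausdorff opK ->
  compact_set opK C -> opK (fun k => ~ C k).
Proof.
  intros Ht Hh Hc.
  apply (op_ext opK (fun x => exists i : {O : set K | opK O /\ forall z, O z -> ~ C z}, proj1_sig i x)).
  - apply top_union; auto. intros i; apply (proj2_sig i).
  - intro z; split.
    + intros [i Hz]; apply (proj2_sig i); auto.
    + intro Hz. destruct (separation opK C z Ht Hh Hc Hz) as [O [Q [HO [HQ [Oz [CQ Hd]]]]]].
      assert (HOC : forall y, O y -> ~ C y) by (intros y Oy Cy; apply (Hd y); auto).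
      exists (exist _ O (conj HO HOC)); simpl; auto.
Qed.

Lemma pow_open_full {I K} (opK : set K -> Prop) : pow_open (I:=I) opK (fun _ => True).
Proof. intros x _. exists [], (fun _ _ => True). split; [intros i []|auto]. Qed.

Lemma pow_open_inter {I K} (opK : set K -> Prop) (U V : set (I -> K)) : is_topology opK ->
  pow_open opK U -> pow_open opK V -> pow_open opK (fun x => U x /\ V x).
Proof.
  intros Ht HU HV x [Ux Vx].
  destruct (HU x Ux) as [l1 [V1 [H1 H1']]]. destruct (HV x Vx) as [l2 [V2 [H2 H2']]].
  exists (l1 ++ l2), (fun i k => (In i l1 -> V1 i k) /\ (In i l2 -> V2 i k)). split.
  - intros i Hi. split.
    + destruct (classic (In i l1)) as [Hi1|Hi1]; destruct (classic (In i l2)) as [Hi2|Hi2].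
      * apply (op_ext opK (fun k => V1 i k /\ V2 i k)). apply top_inter; auto.
        apply H1; auto. apply H2; auto. intro z; split; [intros [A B]; split; auto|intros [A B]; split; auto].
      * apply (op_ext opK (V1 i)). apply H1; auto. intro z; split; [intros A; split; auto; intros; contradiction|intros [A B]; auto].
      * apply (op_ext opK (V2 i)). apply H2; auto. intro z; split; [intros A; split; auto; intros; contradiction|intros [A B]; auto].
      * apply in_app_or in Hi; destruct Hi; contradiction.
    + split; intro; [apply H1|apply H2]; auto.
  - intros y Hy. split.
    + apply H1'. intros i Hi. apply (Hy i (in_or_app _ _ _ (or_introl Hi))); auto.
    + apply H2'. intros i Hi. apply (Hy i (in_or_app _ _ _ (or_intror Hi))); auto.
Qed.

Lemma pow_open_cyl {I K} (opK : set K -> Prop) (g : I) (O : set K) : opK O ->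
  pow_open opK (fun x : I -> K => O (x g)).
Proof.
  intros HO x Hx. exists [g], (fun _ => O). split.
  - intros i [<-|[]]; auto.
  - intros y Hy. apply (Hy g); left; auto.
Qed.

Lemma nbhd_open {T} (op : set T -> Prop) U x : op U -> U x -> nbhd op x U.
Proof. intros; exists U; auto. Qed.

Lemma shift_shift {G K} (mul : G -> G -> G) inv e h h' (y : G -> K) : is_group mul inv e ->
  shift mul h (shift mul h' y) = shift mul (mul h h') y.
Proof.
  intros [Ha _]. unfold shift. apply functional_extensionality; intro g. rewrite Ha; auto.
Qed.

Lemma shift_e {G K} (mul : G -> G -> G) inv e (y : G -> K) : is_group mul inv e -> shift mul e y = y.
Proof.
  intros [_ [_ [He _]]]. unfold shift. apply functional_extensionality; intro g. rewrite He; auto.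
Qed.

Lemma shift_inv {G K} (mul : G -> G -> G) inv e i (x : G -> K) : is_group mul inv e ->
  shift mul (inv i) (shift mul i x) = x.
Proof.
  intros Hg. rewrite (shift_shift mul inv e); auto. pose proof Hg as Hg'. destruct Hg' as [_ [_ [_ [Hl _]]]].
  rewrite Hl. apply (shift_e mul inv e); auto.
Qed.

Lemma pow_open_shift {G K} (opK : set K -> Prop) (mul : G -> G -> G) inv e h (U : set (G -> K)) :
  is_group mul inv e -> pow_open opK U -> pow_open opK (fun z => U (shift mul h z)).
Proof.
  intros Hg HU z Hz. destruct (HU _ Hz) as [l [V [H1 H2]]].
  assert (Hr : forall i, mul (mul i h) (inv h) = i).
  { intro i. destruct Hg as [Ha [_ [Hr [_ Hv]]]]. rewrite <- Ha, Hv, Hr; auto. }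
  exists (map (fun i => mul i h) l), (fun j => V (mul j (inv h))). split.
  - intros j Hj. apply in_map_iff in Hj. destruct Hj as [i [<- Hi]]. rewrite Hr. apply H1; auto.
  - intros y Hy. apply H2. intros i Hi. unfold shift.
    specialize (Hy (mul i h) (in_map (fun i => mul i h) l i Hi)). rewrite Hr in Hy; auto.
Qed.

Lemma Xf_shift {G T K} (opK : set K -> Prop) (mul : G -> G -> G) inv e (act : G -> T -> T) th0 f h x :
  is_group mul inv e -> X_f opK mul act th0 f x -> X_f opK mul act th0 f (shift mul h x).
Proof.
  intros Hg Hx U HU Ux.
  destruct (Hx (fun z => U (shift mul h z)) (pow_open_shift opK mul inv e h U Hg HU) Ux) as [y [Uy [h' Hy]]].
  exists (shift mul h y). split; auto. exists (mul h h'). rewrite Hy. apply (shift_shift mul inv e); auto.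
Qed.

Definition ind {G K} (mul : G -> G -> G) (inv : G -> G) (X : set (G -> K)) (B C : set (G -> K)) (J : list G) : Prop :=
  forall a : G -> bool, exists x, X x /\ forall i, In i J -> shift_img mul (inv i) (if a i then C else B) x.

Definition Pb {G K} (mul : G -> G -> G) (inv : G -> G) (X : set (G -> K)) (B C : set (G -> K)) : Prop :=
  forall n, exists J, NoDup J /\ n <= length J /\ ind mul inv X B C J.

Lemma shift_img_mono {G K} (mul : G -> G -> G) h (A A' : set (G -> K)) x :
  (forall y, A y -> A' y) -> shift_img mul h A x -> shift_img mul h A' x.
Proof. intros H [y [Ay Ey]]; exists y; auto. Qed.

Lemma ind_mono {G K} mul inv (X : set (G -> K)) B B' C C' J :
  (forall y, B y -> B' y) -> (forall y, C y -> C' y) -> ind mul inv X B C J -> ind mul inv X B' C' J.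
Proof.
  intros HB HC H a. destruct (H a) as [x [Xx Hx]]. exists x; split; auto.
  intros i Hi. specialize (Hx i Hi). destruct (a i); eapply shift_img_mono; eauto.
Qed.

Lemma Pb_mono {G K} mul inv (X : set (G -> K)) B B' C C' :
  (forall y, B y -> B' y) -> (forall y, C y -> C' y) -> Pb mul inv X B C -> Pb mul inv X B' C'.
Proof.
  intros HB HC H n. destruct (H n) as [J [H1 [H2 H3]]]. exists J; split; auto; split; auto.
  eapply ind_mono; eauto.
Qed.

Lemma ind_swap {G K} mul inv (X : set (G -> K)) B C J : ind mul inv X B C J -> ind mul inv X C B J.
Proof.
  intros H a. destruct (H (fun g => negb (a g))) as [x [Xx Hx]]. exists x; split; auto.
  intros i Hi. specialize (Hx i Hi). destruct (a i); simpl in Hx; auto.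
Qed.

Lemma Pb_swap {G K} mul inv (X : set (G -> K)) B C : Pb mul inv X B C -> Pb mul inv X C B.
Proof.
  intros H n. destruct (H n) as [J [H1 [H2 H3]]]. exists J; split; auto; split; auto. apply ind_swap; auto.
Qed.

Lemma Pb_nonempty {G K} mul inv (X : set (G -> K)) B C : Pb mul inv X B C -> exists x, B x.
Proof.
  intros H. destruct (H 1) as [J [_ [H2 H3]]]. destruct J as [|i J]; simpl in H2; [lia|].
  destruct (H3 (fun _ => false)) as [x [_ Hx]]. destruct (Hx i (or_introl eq_refl)) as [y [By _]].
  exists y; auto.
Qed.

Lemma NoDup_map_in {A B} (f : A -> B) (l : list A) : NoDup l ->
  (forall x y, In x l -> In y l -> f x = f y -> x = y) -> NoDup (map f l).
Proof.
  induction l as [|a l IH]; intros Hn Hf; simpl; [constructor|].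
  inversion Hn; subst. constructor.
  - intro Hin. apply in_map_iff in Hin. destruct Hin as [y [Ey Hy]].
    assert (y = a) by (apply Hf; simpl; auto). subst; contradiction.
  - apply IH; auto. intros; apply Hf; simpl; auto.
Qed.

Lemma ind_split {G K} mul inv (X : set (G -> K)) (d : G) B B' C m :
  exists N, forall J, NoDup J -> N <= length J -> ind mul inv X (fun x => B x \/ B' x) C J ->
  exists J', NoDup J' /\ length J' = m /\ (ind mul inv X B C J' \/ ind mul inv X B' C J').
Proof.
  destruct (Comb.E_std m) as [N HN]. exists N. intros J HJ HNJ Hind.
  set (n := length J).
  set (apat := fun (tau : nat -> bool) (g : G) =>
    if excluded_middle_informative (exists k, k < n /\ nth k J d = g /\ tau k = true) then true else false).
  assert (Hw : forall tau, exists x, X x /\ forall i, In i J ->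
     shift_img mul (inv i) (if apat tau i then C else (fun x => B x \/ B' x)) x) by (intro; apply Hind).
  set (wit := fun tau => proj1_sig (constructive_indefinite_description _ (Hw tau))).
  assert (wit_spec : forall tau, X (wit tau) /\ forall i, In i J ->
     shift_img mul (inv i) (if apat tau i then C else (fun x => B x \/ B' x)) (wit tau))
    by (intro tau; exact (proj2_sig (constructive_indefinite_description _ (Hw tau)))).
  set (col := fun (tau : nat -> bool) (k : nat) =>
    if excluded_middle_informative (shift_img mul (inv (nth k J d)) B (wit tau)) then false else true).
  destruct (HN n col HNJ) as [L [xc [HL1 [HL2 [HL3 HL4]]]]].
  assert (Hinj : forall k k', k < n -> k' < n -> nth k J d = nth k' J d -> k = k').
  { intros k k' Hk Hk' E. apply (proj1 (NoDup_nth J d) HJ); auto. }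
  assert (Hapat : forall tau k, k < n -> apat tau (nth k J d) = tau k).
  { intros tau k Hk. unfold apat. destruct excluded_middle_informative as [[k' [Hk' [E Ht]]]|Hn].
    - assert (k' = k) by (apply Hinj; auto). subst; auto.
    - destruct (tau k) eqn:Et; auto. exfalso; apply Hn; exists k; auto. }
  exists (map (fun k => nth k J d) L). split; [|split].
  - apply NoDup_map_in; [exact HL2|]. intros k k' Hk Hk' E. apply Hinj; auto.
  - rewrite length_map; auto.
  - assert (Main : forall a : G -> bool, exists tau, forall k, In k L ->
       (a (nth k J d) = true -> shift_img mul (inv (nth k J d)) C (wit tau)) /\
       (a (nth k J d) = false -> shift_img mul (inv (nth k J d)) (if xc then B' else B) (wit tau))).
    { intro a. destruct (HL4 (fun k => a (nth k J d))) as [tau [T1 T2]]. exists tau. intros k Hk.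
      pose proof (HL3 k Hk) as Hkn.
      assert (Hin : In (nth k J d) J) by (apply nth_In; auto).
      destruct (wit_spec tau) as [_ Hs]. specialize (Hs _ Hin). rewrite Hapat in Hs; auto.
      pose proof (T1 k Hk) as T1k; simpl in T1k; rewrite T1k in Hs. split.
      - intro Ea. rewrite Ea in Hs; auto.
      - intro Ea. rewrite Ea in Hs. pose proof (T2 k Hk Ea) as Hc. unfold col in Hc.
        destruct excluded_middle_informative as [HB|HB].
        + subst xc; auto.
        + subst xc. destruct Hs as [y [[By|By'] Ey]]; [exfalso; apply HB; exists y; auto|exists y; auto]. }
    destruct xc; [right|left]; intro a; destruct (Main a) as [tau Ht]; exists (wit tau);
      (split; [apply wit_spec|]); intros i Hi; apply in_map_iff in Hi; destruct Hi as [k [<- Hk]];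
      destruct (a (nth k J d)) eqn:Ea; apply (Ht k Hk); auto.
Qed.

Lemma Pb_split {G K} mul inv (X : set (G -> K)) (d : G) B B' C :
  Pb mul inv X (fun x => B x \/ B' x) C -> Pb mul inv X B C \/ Pb mul inv X B' C.
Proof.
  intros H. apply NNPP. intro Hn. apply not_or_and in Hn. destruct Hn as [H1 H2].
  apply not_all_ex_not in H1. destruct H1 as [n1 H1].
  apply not_all_ex_not in H2. destruct H2 as [n2 H2].
  destruct (ind_split mul inv X d B B' C (n1 + n2)) as [N HN].
  destruct (H N) as [J [HJ1 [HJ2 HJ3]]].
  destruct (HN J HJ1 HJ2 HJ3) as [J' [HJ'1 [HJ'2 [Hi|Hi]]]].
  - apply H1. exists J'. repeat split; auto. lia.
  - apply H2. exists J'. repeat split; auto. lia.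
Qed.

Lemma Pb_split2 {G K} mul inv (X : set (G -> K)) (d : G) B B' C :
  Pb mul inv X C (fun x => B x \/ B' x) -> Pb mul inv X C B \/ Pb mul inv X C B'.
Proof.
  intros H. apply Pb_swap in H. destruct (Pb_split mul inv X d B B' C H); [left|right]; apply Pb_swap; auto.
Qed.

Definition cyl {G K} (l : list (G * K * set K)) : set (G -> K) :=
  fun x => forall t, In t l -> snd t (x (fst (fst t))).
Definition okl {G K} (opK : set K -> Prop) (A : set (G * K)) (l : list (G * K * set K)) : Prop :=
  forall t, In t l -> A (fst t) /\ opK (snd t) /\ snd t (snd (fst t)).

Lemma prime_list {T I} (P : set T -> Prop) (S : I -> set T) (l : list I) :
  (forall A B, (forall x, A x -> B x) -> P A -> P B) ->
  (forall A B, P (fun x => A x \/ B x) -> P A \/ P B) ->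
  P (fun x => exists i, In i l /\ S i x) -> (exists i, In i l /\ P (S i)) \/ P (fun _ => False).
Proof.
  intros Hm Hp. induction l as [|a l IH]; intros H.
  - right. refine (Hm _ _ _ H). intros x [i [[] _]].
  - assert (H' : P (fun x => S a x \/ (exists i, In i l /\ S i x))).
    { refine (Hm _ _ _ H). intros x Hx. destruct Hx as [i [[<-|Hi] Hs]]; [left|right; exists i]; auto. }
    destruct (Hp _ _ H') as [Ha|Hl].
    + left; exists a; simpl; auto.
    + destruct (IH Hl) as [[i [Hi Hs]]|Hf]; [left; exists i; simpl; auto|right; auto].
Qed.

Lemma cluster {G K} (opK : set K -> Prop) (P : set (G -> K) -> Prop) :
  is_topology opK -> compact opK ->
  (forall A B, (forall x, A x -> B x) -> P A -> P B) ->
  (forall A B, P (fun x => A x \/ B x) -> P A \/ P B) ->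
  P (fun _ => True) ->
  (forall A, P A -> exists x, A x) ->
  exists x, forall N, nbhd (pow_open opK) x N -> P N.
Proof.
  intros Htop Hc Hm Hp Hfull Hne.
  set (good := fun (A : set (G * K)) => forall l, okl opK A l -> P (cyl l)).
  assert (Hcyl0 : P (cyl [])) by (apply (Hm (fun _ => True)); auto; intros x _ t []).
  destruct (ZW.zorn_sets (G * K) good) as [A0 [HA0 Hmax]].
  { intros F HF Hch l Hl.
    assert (Hcl : forall l' : list (G * K * set K), (forall t, In t l' -> exists A, F A /\ A (fst t)) ->
               l' = [] \/ exists A, F A /\ forall t, In t l' -> A (fst t)).
    { induction l' as [|t l' IH]; intros H; [left; auto|right].
      destruct (H t (or_introl eq_refl)) as [A1 [FA1 A1t]].
      destruct (IH (fun t' Ht' => H t' (or_intror Ht'))) as [->|[A2 [FA2 HA2]]].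
      - exists A1; split; auto. intros t' [<-|[]]; auto.
      - destruct (Hch A1 A2 FA1 FA2) as [S12|S21].
        + exists A2; split; auto. intros t' [<-|Ht']; auto.
        + exists A1; split; auto. intros t' [<-|Ht']; auto. }
    destruct (Hcl l) as [->|[A [FA HA]]]; auto.
    - intros t Ht; apply (Hl t Ht).
    - apply (HF A FA). intros t Ht. destruct (Hl t Ht) as [_ H2]; split; auto. }
  assert (Htot : forall g, exists k, A0 (g, k)).
  { intro g. apply NNPP. intro Hng.
    assert (Hext : exists k, good (fun p => A0 p \/ p = (g, k))).
    { apply NNPP. intro Hn.
      assert (Hbad : forall k, exists l, okl opK (fun p => A0 p \/ p = (g, k)) l /\ ~ P (cyl l)).
      { intro k. assert (Hk : ~ good (fun p => A0 p \/ p = (g, k))) by (intro Hg; apply Hn; exists k; auto).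
        apply not_all_ex_not in Hk. destruct Hk as [l Hl]. exists l. apply imply_to_and in Hl; auto. }
      set (Ix := {q : K * list (G * K * set K) | okl opK (fun p => A0 p \/ p = (g, fst q)) (snd q) /\ ~ P (cyl (snd q))}).
      set (Fo := fun (i : Ix) (z : K) => forall t, In t (snd (proj1_sig i)) -> fst t = (g, fst (proj1_sig i)) -> snd t z).
      destruct (Hc Ix Fo) as [is His].
      - intro i. unfold Fo. apply open_inter_cond; auto. intros t Ht. apply (proj1 (proj2_sig i) t Ht).
      - intros k _. destruct (Hbad k) as [l [Hl1 Hl2]].
        exists (exist _ (k, l) (conj Hl1 Hl2)). unfold Fo; simpl. intros t Ht Et.
        destruct (Hl1 t Ht) as [_ [_ H3]]. rewrite Et in H3; auto.
      - set (fA := fun l : list (G * K * set K) =>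
           filter (fun t => if excluded_middle_informative (A0 (fst t)) then true else false) l).
        set (Lbig := flat_map (fun i : Ix => fA (snd (proj1_sig i))) is).
        assert (HL : P (cyl Lbig)).
        { apply HA0. intros t Ht. unfold Lbig in Ht. apply in_flat_map in Ht. destruct Ht as [i [_ Ht]].
          unfold fA in Ht. apply filter_In in Ht. destruct Ht as [Ht Ha].
          destruct excluded_middle_informative as [Ha'|]; [|discriminate].
          destruct (proj1 (proj2_sig i) t Ht) as [_ [H2 H3]]; auto. }
        assert (HU : P (fun x => exists i, In i is /\ cyl (snd (proj1_sig i)) x)).
        { refine (Hm _ _ _ HL). intros x0 Hx. destruct (His (x0 g) Logic.I) as [i [Hi Hfi]].
          exists i; split; auto. intros t Ht.
          destruct (classic (A0 (fst t))) as [Ha|Ha].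
          - apply Hx. unfold Lbig. apply in_flat_map. exists i; split; auto.
            unfold fA. apply filter_In. split; auto. destruct excluded_middle_informative; auto.
          - destruct (proj1 (proj2_sig i) t Ht) as [[Ha'|Et] _]; [contradiction|].
            rewrite Et; simpl. apply Hfi; auto. }
        destruct (prime_list P _ is Hm Hp HU) as [[i [_ Hi]]|Hf].
        + apply (proj2 (proj2_sig i)); auto.
        + destruct (Hne _ Hf) as [_ []]. }
    destruct Hext as [k Hk]. apply (Hmax (fun p => A0 p \/ p = (g, k))); auto.
    exists (g, k). split; auto. intro Ha; apply Hng; exists k; auto. }
  set (x := fun g => proj1_sig (constructive_indefinite_description _ (Htot g))).
  assert (Hx : forall g, A0 (g, x g)) by (intro g; exact (proj2_sig (constructive_indefinite_description _ (Htot g)))).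
  exists x. intros N [U [HU [Ux UN]]]. destruct (HU x Ux) as [l0 [V [H1 H2]]].
  apply (Hm (cyl (map (fun i => (i, x i, V i)) l0))).
  - intros y Hy. apply UN, H2. intros i Hi. apply (Hy (i, x i, V i)). apply (in_map (fun i => (i, x i, V i))); auto.
  - apply HA0. intros t Ht. apply in_map_iff in Ht. destruct Ht as [i [<- Hi]]. simpl.
    destruct (H1 i Hi); auto.
Qed.

Theorem mainTheorem9 (G T K : Type)
  (opG : set G -> Prop) (mul : G -> G -> G) (inv : G -> G) (e : G)
  (opT : set T -> Prop) (act : G -> T -> T)
  (opK : set K -> Prop) (th0 : T) (f : T -> K) :
  topological_group opG mul inv e ->
  is_topology opT -> compact opT -> hausdorff opT ->
  is_action mul e act -> jointly_continuous opG opT act ->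
  minimal opT act -> equicontinuous opT act ->
  is_topology opK -> compact opK -> hausdorff opK ->
  continuous_on opT opK (orbit act th0) f ->
  (forall th, closure opT (orbit act th0) th) ->
  invariant_under_no_rotation opT opK act th0 f ->
  (non_null opK mul inv (X_f opK mul act th0 f) <->
   exists V0 V1 : set K,
     compact_set opK V0 /\ compact_set opK V1 /\ (forall k, V0 k -> V1 k -> False) /\
     forall l : nat, exists g : nat -> G,
       forall a : nat -> bool, exists x, X_f opK mul act th0 f x /\
         forall i, i < l -> (if a i then V1 else V0) (x (g i))).
Proof.
  intros Htg _ _ _ _ _ _ _ Htop Hc Hh _ _ _.
  destruct Htg as [_ [Hg _]].
  assert (Hgr : forall a b, mul (mul a b) (inv b) = a).
  { intros a b. destruct Hg as [Ha [_ [Hr [_ Hv]]]]. rewrite <- Ha, Hv, Hr; auto. }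
  set (X := X_f opK mul act th0 f).
  split.
  -
    intros [x0 [x1 [X0 [X1 [Hne HIN]]]]].
    assert (Hg0 : exists g0, x0 g0 <> x1 g0).
    { apply NNPP; intro H. apply Hne. apply functional_extensionality; intro g.
      apply NNPP; intro H'; apply H; exists g; auto. }
    destruct Hg0 as [g0 Hg0].
    destruct (Hh _ _ Hg0) as [U [W [HU [HW [Ux [Wx Hd]]]]]].
    destruct (separation opK (fun k => ~ U k) (x0 g0) Htop Hh (closed_compact opK U Htop Hc HU))
      as [O0 [Q0 [HO0 [HQ0 [O0x [CQ0 D0]]]]]]; [intro H; apply H; auto|].
    destruct (separation opK (fun k => ~ W k) (x1 g0) Htop Hh (closed_compact opK W Htop Hc HW))
      as [O1 [Q1 [HO1 [HQ1 [O1x [CQ1 D1]]]]]]; [intro H; apply H; auto|].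
    exists (fun k => ~ Q0 k), (fun k => ~ Q1 k).
    split; [apply closed_compact; auto|].
    split; [apply closed_compact; auto|].
    split.
    { intros k H0 H1. apply (Hd k).
      - apply NNPP; intro Hn; apply H0; apply CQ0; auto.
      - apply NNPP; intro Hn; apply H1; apply CQ1; auto. }
    intro l.
    assert (nb0 : nbhd (pow_open opK) x0 (fun x => O0 (x g0))) by (apply nbhd_open; [apply pow_open_cyl|]; auto).
    assert (nb1 : nbhd (pow_open opK) x1 (fun x => O1 (x g0))) by (apply nbhd_open; [apply pow_open_cyl|]; auto).
    destruct (HIN _ _ nb0 nb1 l) as [J [HJ [HlJ Hind]]].
    exists (fun i => mul g0 (nth i J e)).
    intro a.
    set (a' := fun h => if excluded_middle_informative (exists i, i < l /\ nth i J e = h /\ a i = true) then true else false).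
    destruct (Hind J (fun i Hi => Hi) a') as [x [Xx Hx]].
    exists x. split; auto. intros i Hi.
    assert (Hin : In (nth i J e) J) by (apply nth_In; lia).
    assert (Ha' : a' (nth i J e) = a i).
    { unfold a'. destruct excluded_middle_informative as [[i' [Hi' [E Ha]]]|Hn].
      - assert (i' = i) by (apply (proj1 (NoDup_nth J e) HJ); auto; lia). subst; auto.
      - destruct (a i) eqn:Ea; auto. exfalso; apply Hn; exists i; auto. }
    specialize (Hx _ Hin). rewrite Ha' in Hx.
    destruct (a i); destruct Hx as [y [[Xy Ny] Ey]]; rewrite Ey; unfold shift; rewrite Hgr.
    + intro Hq. apply (D1 (y g0)); auto.
    + intro Hq. apply (D0 (y g0)); auto.
  -
    intros [V0 [V1 [HV0 [HV1 [Hdis Hl]]]]].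
    set (A0 := fun x : G -> K => X x /\ V0 (x e)).
    set (A1 := fun x : G -> K => X x /\ V1 (x e)).
    assert (PA : Pb mul inv X A0 A1).
    { intro n. destruct (Hl n) as [g Hgn].
      exists (map g (seq 0 n)). split; [|split].
      - apply NoDup_map_in; [apply seq_NoDup|]. intros i j Hi Hj E.
        apply in_seq in Hi; apply in_seq in Hj.
        apply NNPP; intro Hij.
        destruct (Hgn (fun k => Nat.eqb k i)) as [x [_ Hx]].
        pose proof (Hx i ltac:(lia)) as Hxi. pose proof (Hx j ltac:(lia)) as Hxj.
        rewrite Nat.eqb_refl in Hxi.
        assert (Hb : Nat.eqb j i = false) by (apply Nat.eqb_neq; auto).
        rewrite Hb in Hxj. rewrite E in Hxi. apply (Hdis _ Hxj Hxi).
      - rewrite length_map, length_seq; auto.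
      - intro a. destruct (Hgn (fun k => a (g k))) as [x [Xx Hx]].
        exists x; split; auto. intros i Hi. apply in_map_iff in Hi. destruct Hi as [k [<- Hk]].
        apply in_seq in Hk. specialize (Hx k ltac:(lia)).
        exists (shift mul (g k) x). split.
        + assert (HXs : X (shift mul (g k) x)) by (apply (Xf_shift opK mul inv e); auto).
          assert (Hse : shift mul (g k) x e = x (g k)).
          { unfold shift. destruct Hg as [_ [Hl' _]]. rewrite Hl'; auto. }
          simpl in Hx. destruct (a (g k)); split; auto; rewrite Hse; auto.
        + symmetry. apply (shift_inv mul inv e); auto. }
    set (P0 := fun N : set (G -> K) => Pb mul inv X (fun x => N x /\ A0 x) A1).
    destruct (cluster opK P0 Htop Hc) as [x0 H0].
    { intros A B HAB HA. eapply Pb_mono; [| |exact HA]; simpl; intros y Hy; [destruct Hy; split|]; auto. }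
    { intros A B H. apply (Pb_split mul inv X e).
      eapply Pb_mono; [| |exact H]; simpl; auto. intros y [[Ha|Hb] Hy]; [left|right]; split; auto. }
    { eapply Pb_mono; [| |exact PA]; simpl; auto. }
    { intros A HA. destruct (Pb_nonempty _ _ _ _ _ HA) as [y [Ay _]]; exists y; auto. }
    set (P1 := fun N : set (G -> K) => forall N0, nbhd (pow_open opK) x0 N0 ->
         Pb mul inv X (fun x => N0 x /\ A0 x) (fun x => N x /\ A1 x)).
    assert (nbfull : forall x : G -> K, nbhd (pow_open opK) x (fun _ => True)).
    { intro x. apply nbhd_open; auto. apply pow_open_full. }
    destruct (cluster opK P1 Htop Hc) as [x1 H1].
    { intros A B HAB HA N0 nb. eapply Pb_mono; [| |exact (HA N0 nb)]; simpl; auto.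
      intros y [Ay Hy]; split; auto. }
    { intros A B H. apply NNPP; intro Hn. apply not_or_and in Hn. destruct Hn as [Hna Hnb].
      apply not_all_ex_not in Hna. destruct Hna as [Na Hna]. apply imply_to_and in Hna. destruct Hna as [nba Hna].
      apply not_all_ex_not in Hnb. destruct Hnb as [Nb Hnb]. apply imply_to_and in Hnb. destruct Hnb as [nbb Hnb].
      destruct nba as [Ua [HUa [Uax UaN]]]. destruct nbb as [Ub [HUb [Ubx UbN]]].
      assert (nbab : nbhd (pow_open opK) x0 (fun x => Ua x /\ Ub x)).
      { apply nbhd_open; auto. apply pow_open_inter; auto. }
      specialize (H _ nbab).
      assert (H' : Pb mul inv X (fun x => (Ua x /\ Ub x) /\ A0 x) (fun x => (A x /\ A1 x) \/ (B x /\ A1 x))).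
      { eapply Pb_mono; [| |exact H]; simpl; auto. intros y [[Ha|Hb] Hy]; [left|right]; split; auto. }
      destruct (Pb_split2 mul inv X e _ _ _ H') as [Hq|Hq].
      - apply Hna. eapply Pb_mono; [| |exact Hq]; simpl; auto. intros y [[Uy _] Hy]; split; auto.
      - apply Hnb. eapply Pb_mono; [| |exact Hq]; simpl; auto. intros y [[_ Uy] Hy]; split; auto. }
    { intros N0 nb. eapply Pb_mono; [| |exact (H0 N0 nb)]; simpl; auto. }
    { intros A HA. specialize (HA _ (nbfull x0)). apply Pb_swap in HA.
      destruct (Pb_nonempty _ _ _ _ _ HA) as [y [Ay _]]; exists y; auto. }
    assert (HX0 : X x0).
    { intros U HU Ux. destruct (Pb_nonempty _ _ _ _ _ (H0 U (nbhd_open _ _ _ HU Ux))) as [y [Uy [Xy _]]].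
      apply (Xy U HU Uy). }
    assert (HX1 : X x1).
    { intros U HU Ux. specialize (H1 U (nbhd_open _ _ _ HU Ux) _ (nbfull x0)). apply Pb_swap in H1.
      destruct (Pb_nonempty _ _ _ _ _ H1) as [y [Uy [Xy _]]]. apply (Xy U HU Uy). }
    assert (HV0c : opK (fun k => ~ V0 k)) by (apply compact_closed; auto).
    assert (HV1c : opK (fun k => ~ V1 k)) by (apply compact_closed; auto).
    assert (Hx0e : V0 (x0 e)).
    { apply NNPP; intro Hn.
      destruct (Pb_nonempty _ _ _ _ _ (H0 _ (nbhd_open _ _ _ (pow_open_cyl opK e _ HV0c) Hn))) as [y [Hy [_ Vy]]].
      contradiction. }
    assert (Hx1e : V1 (x1 e)).
    { apply NNPP; intro Hn.
      specialize (H1 _ (nbhd_open _ _ _ (pow_open_cyl opK e _ HV1c) Hn) _ (nbfull x0)). apply Pb_swap in H1.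
      destruct (Pb_nonempty _ _ _ _ _ H1) as [y [Hy [_ Vy]]]. contradiction. }
    exists x0, x1. split; auto. split; auto. split.
    { intro E. rewrite E in Hx0e. apply (Hdis _ Hx0e Hx1e). }
    intros N0 N1 nb0 nb1 n.
    destruct (H1 N1 nb1 N0 nb0 n) as [J [HJ [HnJ Hind]]].
    exists J. split; auto. split; auto.
    intros I HI a. destruct (Hind a) as [x [Xx Hx]]. exists x; split; auto.
    intros i Hi. specialize (Hx i (HI i Hi)).
    destruct (a i); (eapply shift_img_mono; [|exact Hx]); simpl; intros y [Ny [Xy _]]; split; auto.
Qed.
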